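(* Let $X,Y$ be Banach spaces over $\mathbb{K}\in\{\mathbb{R},\mathbb{C}\}$, let $G\in L(X,Y)$ with $\|G\|=1$, assume $\|\cdot\|_G$ is a norm on $L(X,Y)$, and let $T\in L(X,Y)$ with $\|T\|_G=1$. Suppose $\varphi\in L(X,Y)^*$ is a weak*-limit of a net $(\psi_{x_\alpha,y_\alpha^*})$, where $(x_\alpha,y_\alpha^* )\subset S_X\times S_{Y^*}$ is a net with $\|Gx_\alpha\|\to1$ and $y_\alpha^*(Tx_\alpha)\to1$. Then $\varphi(T)=1$ and $\|\varphi\|_{G,*}=1$; that is, $\varphi$ is a support functional of $T$ in $(L(X,Y),\|\cdot\|_G)$.
   Context: $S_X$ is the unit sphere of $X$, $Y^*$ the dual of $Y$. For $x\in X$, $y^*\in Y^*$, $\psi_{x,y^*}(S)=y^*(Sx)$ for $S\in L(X,Y)$. The $G$-norm is $\|T\|_G := \inf_{\delta>0}\sup\{\|Tx\|: x\in S_X,\ \|Gx\|>1-\delta\}$, and $\|\cdot\|_{G,*}$ denotes the dual norm on $(L(X,Y),\|\cdot\|_G)^*$. A support functional of $T$ is a functional $f$ of dual norm $1$ with $f(T)=\|T\|_G$. *)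

(* Defs.v *)
From HB Require Import structures.
From mathcomp Require Import all_boot all_order all_algebra.
From mathcomp Require Import all_classical all_reals all_analysis.
From mathcomp Require Import complex.
Import Order.TTheory GRing.Theory Num.Theory.
Import numFieldNormedType.Exports.

Set Implicit Arguments.
Unset Strict Implicit.
Unset Printing Implicit Defensive.

Local Open Scope classical_set_scope.
Local Open Scope ring_scope.

(* The scalar field K in {R, C}: KK R false = R, KK R true = R[i] = C. *)
Definition KK (R : realType) (b : bool) : numFieldType :=
  if b then (R[i] : numFieldType) else (R : numFieldType).

Section Defs.
Variable K : numFieldType.

Definition is_lin (V W : normedModType K) (f : V -> W) : Prop :=
  forall (a : K) (u v : V), f (a *: u + v) = a *: f u + f v.

(* L(V,W): bounded (= continuous) linear operators *)
Definition bounded_op (V W : normedModType K) (f : V -> W) : Prop :=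
  is_lin f /\ continuous f.

Definition dual_elt (V : normedModType K) (f : V -> K) : Prop :=
  (forall (a : K) (u v : V), f (a *: u + v) = a * f u + f v) /\ continuous f.

Definition opnorm (V W : normedModType K) (f : V -> W) : K :=
  supremum 0 [set `|f x| | x in [set x : V | `|x| <= 1]].

Definition fnorm (V : normedModType K) (f : V -> K) : K :=
  supremum 0 [set `|f x| | x in [set x : V | `|x| <= 1]].

Definition Gnorm (V W : normedModType K) (G T : V -> W) : K :=
  infimum 0
    [set supremum 0 [set `|T x| | x in [set x : V | `|x| = 1 /\ 1 - d < `|G x|]]
     | d in [set d : K | 0 < d]].

(* ||.||_G is a norm on L(V,W) (it is always a seminorm) *)
Definition Gnorm_is_norm (V W : normedModType K) (G : V -> W) : Prop :=
  forall S : V -> W, bounded_op S -> Gnorm G S = 0 -> S = (fun _ => 0).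

(* phi is an element of L(V,W)^* (w.r.t. the operator norm); L(V,W) is
   represented by the predicate bounded_op on V -> W *)
Definition op_dual_elt (V W : normedModType K) (phi : (V -> W) -> K) : Prop :=
  (forall (a : K) (S1 S2 : V -> W), bounded_op S1 -> bounded_op S2 ->
     phi (fun u => a *: S1 u + S2 u) = a * phi S1 + phi S2) /\
  (exists C : K, forall S : V -> W, bounded_op S -> `|phi S| <= C * opnorm S).

Definition psi (V W : normedModType K) (x : V) (y : W -> K) (S : V -> W) : K :=
  y (S x).

Definition Gdualnorm (V W : normedModType K) (G : V -> W) (phi : (V -> W) -> K) : K :=
  supremum 0 [set `|phi S| | S in [set S : V -> W | bounded_op S /\ Gnorm G S <= 1]].

Definition directed (I : Type) (le : I -> I -> Prop) : Prop :=
  (exists i : I, True) /\ (forall i, le i i) /\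
  (forall i j k, le i j -> le j k -> le i k) /\
  (forall i j, exists k, le i k /\ le j k).

Definition net_cvg (I : Type) (le : I -> I -> Prop) (u : I -> K) (l : K) : Prop :=
  forall e : K, 0 < e -> exists i0 : I, forall i, le i0 i -> `|u i - l| < e.

End Defs.

(* Main.v *)
Require Import Defs.
From HB Require Import structures.
From mathcomp Require Import all_boot all_order all_algebra.
From mathcomp Require Import all_classical all_reals all_analysis.
From mathcomp Require Import complex.
Import Order.TTheory GRing.Theory Num.Theory.
Import numFieldNormedType.Exports.
Local Open Scope classical_set_scope.
Local Open Scope ring_scope.
Lemma sup_case (K : numFieldType) (x0 : K) (A : set K) :
  supremum x0 A = x0 \/ supremums A (supremum x0 A).
Proof.
rewrite /supremum; case: ifP => _; first by left.
by case: xgetP => [y -> Ay|_]; [right|left].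
Qed.

Lemma inf_case (K : numFieldType) (x0 : K) (A : set K) :
  infimum x0 A = x0 \/ infimums A (infimum x0 A).
Proof.
rewrite /infimum; case: ifP => _; first by left.
by case: xgetP => [y -> Ay|_]; [right|left].
Qed.

Lemma dual_bound (K : numFieldType) (Y : normedModType K) (y : Y -> K) :
  dual_elt y -> fnorm y = 1 -> forall w, `|y w| <= `|w|.
Proof.
move=> [hl _] h1 w.
have y0 : y 0 = 0.
  have := hl 1 0 0; rewrite scaler0 addr0 mul1r => H.
  have : y 0 - y 0 = y 0 + y 0 - y 0 by rewrite -H.
  by rewrite subrr addrK => ->.
have ub : forall u : Y, `|u| <= 1 -> `|y u| <= 1.
  move=> u hu; case: (@sup_case _ 0 [set `|y x| | x in [set x : Y | `|x| <= 1]]).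
    by move=> h; move: h1; rewrite /fnorm h => /eqP; rewrite eq_sym oner_eq0.
  by rewrite -/(fnorm y) h1 => -[ubE _]; apply: ubE; exists u.
have [->|w0] := eqVneq w 0; first by rewrite y0 !normr0.
have n0 : 0 < `|w| by rewrite normr_gt0.
have := ub (`|w|^-1 *: w).
rewrite normrZ ger0_norm ?invr_ge0 ?normr_ge0 // mulVf ?normr_eq0 // lexx.
move=> /(_ isT).
have := hl (`|w|^-1) w 0; rewrite addr0 y0 addr0 => ->.
rewrite normrM ger0_norm ?invr_ge0 ?normr_ge0 //.
by rewrite ler_pdivrMl // mulr1.
Qed.
Lemma main_gen (K : numFieldType) (X Y : normedModType K)
    (G T : X -> Y)
    (hGn : Gnorm_is_norm G)
    (hT : bounded_op T) (hT1 : Gnorm G T = 1)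
    (phi : (X -> Y) -> K) (hphi : op_dual_elt phi)
    (I : Type) (le : I -> I -> Prop) (hI : directed le)
    (x : I -> X) (y : I -> Y -> K)
    (hx : forall i, `|x i| = 1)
    (hy : forall i, dual_elt (y i) /\ fnorm (y i) = 1)
    (hGx : net_cvg le (fun i => `|G (x i)|) 1)
    (hTx : net_cvg le (fun i => y i (T (x i))) 1)
    (hlim : forall S : X -> Y, bounded_op S ->
              net_cvg le (fun i => psi (x i) (y i) S) (phi S)) :
  phi T = 1 /\ Gdualnorm G phi = 1.
Proof.
have [_ [_ [_ hdir]]] := hI.
have yb : forall i w, `|y i w| <= `|w|.
  by move=> i; have [h1 h2] := hy i; exact: dual_bound h1 h2.
have dom : forall d, 0 < d -> exists i0, forall i, le i0 i ->
    1 - d < `|G (x i)|.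
  move=> d d0; have [i0 hi0] := hGx d d0; exists i0 => i /hi0 h.
  have : 1 - `|G (x i)| <= `| `|G (x i)| - 1|.
    rewrite distrC real_ler_norm // rpredB ?normr_real ?real1 //.
  move=> h2; have := le_lt_trans h2 h; rewrite ltrBlDr addrC -ltrBlDr.
  done.
have phiT : phi T = 1.
  apply/eqP; rewrite -subr_eq0 -normr_eq0; apply/negP => /negP hn.
  have e0 : 0 < `|phi T - 1| by rewrite normr_gt0 -normr_eq0.
  set e := `|phi T - 1| in e0 hn *.
  have e2 : 0 < e / 2 by rewrite divr_gt0.
  have [i1 h1] := hlim T hT _ e2.
  have [i2 h2] := hTx _ e2.
  have [k [k1 k2]] := hdir i1 i2.
  have := ler_distD (y k (T (x k))) (phi T) 1.
  rewrite (distrC (phi T) (y k _)) -/e => hle.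
  have := lt_le_trans (ltrD (h1 _ k1) (h2 _ k2)) (lexx _).
  rewrite -splitr /psi => hlt.
  by have := le_lt_trans hle hlt; rewrite ltxx.
split => //.
have key : forall S, bounded_op S -> Gnorm G S <= 1 -> `|phi S| <= 1.
  move=> S hS hS1.
  have [g0|hg] := eqVneq (Gnorm G S) 0.
    have S0 := hGn S hS g0.
    have h := hphi.1 1 S S hS hS.
    have ef : (fun u => 1 *: S u + S u) = S.
      by rewrite S0; apply: funext => u; rewrite scaler0 addr0.
    rewrite ef mul1r in h.
    have : phi S - phi S = phi S + phi S - phi S by rewrite -h.
    by rewrite subrr addrK => <-; rewrite normr0 ler01.
  set A := [set supremum 0 [set `|S z| | z in [set z : X | `|z| = 1 /\ 1 - d < `|G z|]] | d in [set d : K | 0 < d]].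
  have gdef : Gnorm G S = infimum 0 A by [].
  rewrite gdef in hS1 hg.
  case: (@inf_case _ 0 A) => [h|[glb gub]]; first by move: hg; rewrite h eqxx.
  have lb0 : lbound A 0.
    move=> _ [d d0 <-].
    case: (@sup_case _ 0 [set `|S z| | z in [set z : X | `|z| = 1 /\ 1 - d < `|G z|]]) => [->//|[ub _]].
    have [i0 hi0] := dom d d0.
    apply: le_trans (ub `|S (x i0)| _); first exact: normr_ge0.
    by exists (x i0) => //; split; [exact: hx | apply: hi0; exact: hI.2.1].
  have g0 : 0 < infimum 0 A by rewrite lt_def hg gub.
  have : lbound A `|phi S|.
    move=> _ [d d0 <-].
    set B := [set `|S z| | z in [set z : X | `|z| = 1 /\ 1 - d < `|G z|]].
    have a0 : 0 < supremum 0 B.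
      by apply: lt_le_trans g0 (glb _ _); exists d.
    case: (@sup_case _ 0 B) => [ha|[ub _]]; first by move: a0; rewrite ha ltxx.
    set a := supremum 0 B in a0 ub *.
    rewrite real_leNgt ?normr_real ?gtr0_real //; apply/negP => hlt.
    have e0 : 0 < `|phi S| - a by rewrite subr_gt0.
    have [i1 h1] := hlim S hS _ e0.
    have [i2 h2] := dom d d0.
    have [k [k1 k2]] := hdir i1 i2.
    have xk : B `|S (x k)| by exists (x k) => //; split; [exact: hx | exact: h2].
    have hb := le_trans (yb k (S (x k))) (ub _ xk).
    have t := ler_normB (y k (S (x k))) (y k (S (x k)) - phi S).
    rewrite subKr in t.
    have := le_lt_trans t (ler_ltD hb (h1 k k1)).
    by rewrite subrKC ltxx.
  by move=> hlb; apply: le_trans (gub _ hlb) hS1.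
set E := [set `|phi S| | S in [set S : X -> Y | bounded_op S /\ Gnorm G S <= 1]].
have E1 : E 1 by exists T; [split => //; rewrite hT1 | rewrite phiT normr1].
rewrite /Gdualnorm -/E /supremum ifF; last first.
  by apply/eqP => h; move: E1; rewrite h.
apply: xget_subset1; last exact: is_subset1_supremums.
split; first by move=> _ [S [hS hS1] <-]; exact: key.
by move=> z; apply.
Qed.

Theorem lemma3p10 (R : realType) (b : bool)
    (X Y : completeNormedModType (KK R b))
    (G T : X -> Y)
    (hG : bounded_op G) (hG1 : opnorm G = 1)
    (hGn : Gnorm_is_norm G)
    (hT : bounded_op T) (hT1 : Gnorm G T = 1)
    (phi : (X -> Y) -> KK R b) (hphi : op_dual_elt phi)
    (I : Type) (le : I -> I -> Prop) (hI : directed le)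
    (x : I -> X) (y : I -> Y -> KK R b)
    (hx : forall i, `|x i| = 1)
    (hy : forall i, dual_elt (y i) /\ fnorm (y i) = 1)
    (hGx : net_cvg le (fun i => `|G (x i)|) 1)
    (hTx : net_cvg le (fun i => y i (T (x i))) 1)
    (hlim : forall S : X -> Y, bounded_op S ->
              net_cvg le (fun i => psi (x i) (y i) S) (phi S)) :
  phi T = 1 /\ Gdualnorm G phi = 1.
Proof.
exact: (@main_gen (KK R b) X Y G T hGn hT hT1 phi hphi I le hI x y hx hy hGx hTx hlim).
Qed.
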